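(* Let $G$ be an infinite isoradial graph, $G^F$ its Fisher graph equipped with an admissible orientation, and consider the rhombus angles $\bar\alpha_j(\bar x)$, $\bar x\in V$, $j\in\{1,\dots,d(\bar x)\}$, propagated by the rules (R1)–(R3) below. Then these rules are consistent: the angles $\bar\alpha_j(\bar x)$ are well defined as elements of $\mathbb R/4\pi\mathbb Z$, i.e. the value obtained for each $\bar\alpha_j(\bar x)$ does not depend on the sequence of rules used to reach it (in particular, going around the inner cycle of a decoration, or around a cycle of $G^F$ surrounding a face of $G$, returns the initial angle modulo $4\pi$).
   Context: Isoradial graph: $G=(V,E)$ is an infinite, locally finite planar graph embedded so that every face is inscribed in a circle of radius $1$ whose center lies in the interior of the face. The diamond graph $G^\diamond$ has as vertices $V$ together with these circumcenters, each circumcenter joined to the vertices on the boundary of its face; its faces are rhombi of side $1$, and every edge $e$ of $G$ is a diagonal of exactly one rhombus. Fisher graph: $G^F$ is obtained from $G$ by replacing each vertex $\bar x$ of degree $d=d(\bar x)$ by a decoration with $2d$ vertices $w_1(\bar x),\dots,w_d(\bar x),v_1(\bar x),\dots,v_d(\bar x)$ (indices mod $d$): the $w_j(\bar x)$ form a cycle (the inner cycle), in counterclockwise order, and $v_j(\bar x)$ is joined to $w_j(\bar x)$ and $w_{j+1}(\bar x)$ (the $j$-th triangle). The edges of $G$ at $\bar x$, in counterclockwise order, correspond to $v_1(\bar x),\dots,v_d(\bar x)$, and an edge $\bar x\bar y$ of $G$ yields an edge $v_j(\bar x)v_\ell(\bar y)$ of $G^F$ between the corresponding vertices. An orientation of the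 edges of $G^F$ is admissible if the boundary cycle of every face, traversed clockwise, contains an odd number of edges oriented in the direction of traversal. For a directed path $\gamma$ in $G^F$, $\mathrm{co}(\gamma)$ is the number of its edges whose orientation agrees with the direction of $\gamma$. Rhombus angles: for $\bar x\in V$ of degree $d$, the $d$ edges of $G^\diamond$ at $\bar x$ have unit directions $e^{i\bar\alpha_1(\bar x)},\dots,e^{i\bar\alpha_d(\bar x)}$ in counterclockwise order, labelled so that the edge of $G$ corresponding to $v_j(\bar x)$ is the diagonal of the rhombus whose sides at $\bar x$ are $e^{i\bar\alpha_j(\bar x)}$ and $e^{i\bar\alpha_{j+1}(\bar x)}$; $\bar\theta_j(\bar x)\in(0,\pi/2)$ is the half-angle of that rhombus at $\bar x$. The real lifts of these angles are defined by: (R1) fix a vertex $\bar x_0$ and set $\bar\alpha_1(\bar x_0)=0$; (R2) inside a decoration, $\bar\alpha_{j+1}(\bar x)=\bar\alpha_j(\bar x)+2\bar\theta_j(\bar x)$ if the edge between $w_j(\bar x)$ and $w_{j+1}(\bar x)$ is oriented $w_j\to w_{j+1}$, and $\bar\alpha_{j+1}(\bar x)=\bar\alpha_j(\bar x)+2\bar\theta_j(\bar x)+2\pi$ otherwise; (R3) if $v_j(\bar x)$ is adjacent to $v_\ell(\bar y)$, then $\bar\alpha_\ell(\bar y)=\bar\alpha_j(\bar x)-\pi$ if $\mathrm{co}(w_j(\bar x),v_j(\bar x),v_\ell(\bar y),w_\ell(\bar y))$ is odd and $\bar\alpha_\ell(\bar y)=\bar\alpha_j(\bar x)+\pi$ if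 it is even. *)

(* Defs.v *)
From Stdlib Require Import Reals List Arith Relations.
Import ListNotations.
Open Scope R_scope.

(* Combinatorial model of the plane graph G (a combinatorial map).      *)
(* D : darts (= half-edges).  A dart d at vertex x corresponds to the  *)
(* Fisher vertex v_j(x) (the j-th edge of G at x).                     *)
(*   sig d : next dart counterclockwise around the same vertex         *)
(*           (v_j(x) |-> v_(j+1)(x)).                                  *)
(*   iota d : the opposite dart of the same edge (v_j(x) <-> v_l(y)).  *)
(* Vertices of G = sig-orbits; edges = iota-orbits.                    *)

Fixpoint traj {D : Type} (f : D -> D) (d : D) (n : nat) : list D :=
  match n with
  | O => []
  | S m => d :: traj f (f d) m
  end.

Definition is_period {D : Type} (f : D -> D) (d : D) (n : nat) : Prop :=
  (0 < n)%nat /\ Nat.iter n f d = d /\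
  (forall m, (0 < m)%nat -> (m < n)%nat -> Nat.iter m f d <> d).

(* corner map: the corner (d, sig d) at x is followed, along the face of G
   lying between d and sig d (traversed clockwise), by the corner
   (iota (sig d), sig (iota (sig d))) at the next vertex. *)
Definition corner_next {D : Type} (sig iota : D -> D) (d : D) : D :=
  iota (sig d).

(* successor of a dart along the clockwise boundary walk of a face *)
Definition face_next {D : Type} (sig iota : D -> D) (e : D) : D :=
  sig (iota e).

Definition same_vertex {D : Type} (sig : D -> D) (d e : D) : Prop :=
  exists n, Nat.iter n sig d = e.

Fixpoint walk_chain {D : Type} (sig iota : D -> D) (l : list D) : Prop :=
  match l with
  | d :: ((e :: _) as t) => same_vertex sig (iota d) e /\ walk_chain sig iota t
  | _ => True
  end.

Definition closed_walk {D : Type} (sig iota : D -> D) (l : list D) : Prop :=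
  walk_chain sig iota l /\
  match l with
  | [] => True
  | d :: _ => same_vertex sig (iota (last l d)) d
  end.

Inductive hstep {D : Type} (sig iota : D -> D) : list D -> list D -> Prop :=
  | hs_back l1 l2 d : hstep sig iota (l1 ++ d :: iota d :: l2) (l1 ++ l2)
  | hs_face l1 l2 e k : is_period (face_next sig iota) e k ->
      hstep sig iota (l1 ++ traj (face_next sig iota) e k ++ l2) (l1 ++ l2).

Definition homotopic {D : Type} (sig iota : D -> D) : list D -> list D -> Prop :=
  clos_refl_sym_trans (list D) (hstep sig iota).

(* G is an infinite, connected, locally finite graph, cellularly embedded
   in the plane with finite faces (the 2-complex is simply connected and
   non-compact, hence the plane). *)
Definition plane_map {D : Type} (sig iota : D -> D) : Prop :=
  (forall d, iota (iota d) = d) /\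
  (forall d, iota d <> d) /\
  (forall d, exists n, is_period sig d n) /\                       (* locally finite *)
  (forall d, exists k, is_period (corner_next sig iota) d k) /\    (* finite faces *)
  (forall d e, clos_refl_trans D (fun a b => b = sig a \/ b = iota a) d e) /\
  (~ exists l : list D, forall d, In d l) /\
  (forall l, closed_walk sig iota l -> homotopic sig iota l []).   (* planar *)

Fixpoint sumR {D : Type} (f : D -> R) (l : list D) : R :=
  match l with
  | [] => 0
  | d :: t => f d + sumR f t
  end.

(* Isoradial rhombus data: th d = half-angle at x of the rhombus of G^diamond
   whose diagonal is the edge of d (the angle bar-theta_j(x)). *)
Definition isoradial_angles {D : Type} (sig iota : D -> D) (th : D -> R) : Prop :=
  (forall d, 0 < th d < PI / 2) /\
  (forall d, th (iota d) = th d) /\        (* same rhombus, opposite vertex *)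
  (forall d n, is_period sig d n ->         (* rhombi around a vertex *)
      sumR (fun e => 2 * th e) (traj sig d n) = 2 * PI) /\
  (forall d k, is_period (corner_next sig iota) d k ->  (* rhombi around a circumcenter *)
      sumR (fun e => PI - 2 * th (sig e)) (traj (corner_next sig iota) d k) = 2 * PI).

(* Fisher graph.  W d = w_j(x), V d = v_j(x) when d is the j-th dart at x. *)
Inductive FV (D : Type) : Type :=
  | W : D -> FV D
  | V : D -> FV D.
Arguments W {D} _.
Arguments V {D} _.

Definition fisher_edge0 {D : Type} (sig iota : D -> D) (a b : FV D) : Prop :=
  exists d,
    (a = W d /\ b = W (sig d)) \/     (* inner cycle edge w_j w_(j+1) *)
    (a = V d /\ b = W d) \/           (* triangle edge v_j w_j *)
    (a = V d /\ b = W (sig d)) \/     (* triangle edge v_j w_(j+1) *)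
    (a = V d /\ b = V (iota d)).      (* edge coming from G *)

Definition fisher_adj {D : Type} (sig iota : D -> D) (a b : FV D) : Prop :=
  fisher_edge0 sig iota a b \/ fisher_edge0 sig iota b a.

(* o a b = true : the Fisher edge {a,b} is oriented a -> b *)
Definition orientation {D : Type} (sig iota : D -> D) (o : FV D -> FV D -> bool) : Prop :=
  (forall a b, o a b = true -> fisher_adj sig iota a b) /\
  (forall a b, fisher_adj sig iota a b -> o a b <> o b a).

Fixpoint co_path {D : Type} (o : FV D -> FV D -> bool) (l : list (FV D)) : nat :=
  match l with
  | a :: ((b :: _) as t) => ((if o a b then 1 else 0) + co_path o t)%nat
  | _ => O
  end.

Definition co_cycle {D : Type} (o : FV D -> FV D -> bool) (l : list (FV D)) : nat :=
  match l with
  | [] => O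
  | a :: _ => co_path o (l ++ [a])
  end.

(* Boundary cycles of the faces of G^F, each traversed clockwise. *)
(* inner face of the decoration of the vertex of d (n = degree): clockwise
   means w_(j+1) -> w_j *)
Definition inner_face_cw {D : Type} (sig : D -> D) (d : D) (n : nat) : list (FV D) :=
  rev (map W (traj sig d n)).
(* j-th triangle, clockwise: w_j -> w_(j+1) -> v_j *)
Definition triangle_cw {D : Type} (sig : D -> D) (d : D) : list (FV D) :=
  [W d; W (sig d); V d].
(* face of G^F corresponding to a face of G (k corners): clockwise,
   ... -> v_j(x) -> w_(j+1)(x) -> v_(j+1)(x) -> v_l(y) -> ... *)
Definition big_face_cw {D : Type} (sig iota : D -> D) (d : D) (k : nat) : list (FV D) :=
  flat_map (fun c => [V c; W (sig c); V (sig c)]) (traj (corner_next sig iota) d k).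

Definition admissible {D : Type} (sig iota : D -> D) (o : FV D -> FV D -> bool) : Prop :=
  orientation sig iota o /\
  (forall d n, is_period sig d n -> Nat.odd (co_cycle o (inner_face_cw sig d n)) = true) /\
  (forall d, Nat.odd (co_cycle o (triangle_cw sig d)) = true) /\
  (forall d k, is_period (corner_next sig iota) d k ->
       Nat.odd (co_cycle o (big_face_cw sig iota d k)) = true).

(* Rules (R2), (R3) as increments of the lifted angle alpha(d).        *)
(* alpha(d) = bar-alpha_j(x) when d is the j-th dart at x.             *)
Definition incR2 {D : Type} (sig : D -> D) (th : D -> R) (o : FV D -> FV D -> bool)
  (d : D) : R :=
  2 * th d + (if o (W d) (W (sig d)) then 0 else 2 * PI).

Definition incR3 {D : Type} (iota : D -> D) (o : FV D -> FV D -> bool) (d : D) : R :=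
  if Nat.odd (co_path o [W d; V d; V (iota d); W (iota d)]) then - PI else PI.

(* rule_walk d e s : starting from the value a at d, some finite sequence of
   applications of the rules (R2) (in either direction) and (R3) produces the
   value a + s at e. *)
Inductive rule_walk {D : Type} (sig iota : D -> D) (th : D -> R)
    (o : FV D -> FV D -> bool) : D -> D -> R -> Prop :=
  | rw_nil d : rule_walk sig iota th o d d 0
  | rw_R2 d e s : rule_walk sig iota th o (sig d) e s ->
                  rule_walk sig iota th o d e (incR2 sig th o d + s)
  | rw_R2inv d e s : rule_walk sig iota th o d e s ->
                  rule_walk sig iota th o (sig d) e (s - incR2 sig th o d)
  | rw_R3 d e s : rule_walk sig iota th o (iota d) e s ->
                  rule_walk sig iota th o d e (incR3 iota o d + s).

(* Main.v *)
Require Import Defs.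
From Stdlib Require Import Reals List Arith Lia Lra ZArith Relations.
From Stdlib Require Import ClassicalEpsilon FunctionalExtensionality PropExtensionality.
Import ListNotations.
Open Scope R_scope.

Definition cong (x y : R) : Prop := exists z : Z, x - y = 4 * PI * IZR z.

Lemma cong_refl x : cong x x.
Proof. exists 0%Z. simpl. ring. Qed.
Lemma cong_sym x y : cong x y -> cong y x.
Proof. intros [z H]. exists (- z)%Z. rewrite opp_IZR. lra. Qed.
Lemma cong_trans x y w : cong x y -> cong y w -> cong x w.
Proof. intros [z H] [z' H']. exists (z + z')%Z. rewrite plus_IZR. lra. Qed.
Lemma cong_add x y x' y' : cong x y -> cong x' y' -> cong (x + x') (y + y').
Proof. intros [z H] [z' H']. exists (z + z')%Z. rewrite plus_IZR. lra. Qed.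
Lemma cong_eq x y : x = y -> cong x y.
Proof. intros ->. apply cong_refl. Qed.

Fixpoint sumN {D : Type} (f : D -> nat) (l : list D) : nat :=
  match l with [] => 0%nat | d :: t => (f d + sumN f t)%nat end.

Lemma sumR_app {D} (f : D -> R) l1 l2 : sumR f (l1 ++ l2) = sumR f l1 + sumR f l2.
Proof. induction l1; simpl; [ring|rewrite IHl1; ring]. Qed.
Lemma sumN_app {D} (f : D -> nat) l1 l2 : sumN f (l1 ++ l2) = (sumN f l1 + sumN f l2)%nat.
Proof. induction l1; simpl; [lia|rewrite IHl1; lia]. Qed.
Lemma sumR_ext {D} (f g : D -> R) l : (forall x, f x = g x) -> sumR f l = sumR g l.
Proof. intros H; induction l; simpl; [ring|rewrite H, IHl; ring]. Qed.
Lemma sumN_ext {D} (f g : D -> nat) l : (forall x, f x = g x) -> sumN f l = sumN g l.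
Proof. intros H; induction l; simpl; [lia|rewrite H, IHl; lia]. Qed.
Lemma sumR_plus {D} (f g : D -> R) l : sumR (fun x => f x + g x) l = sumR f l + sumR g l.
Proof. induction l; simpl; [ring|rewrite IHl; ring]. Qed.
Lemma sumR_minus {D} (f g : D -> R) l : sumR (fun x => f x - g x) l = sumR f l - sumR g l.
Proof. induction l; simpl; [ring|rewrite IHl; ring]. Qed.
Lemma sumR_scal {D} (c : R) (f : D -> R) l : sumR (fun x => c * f x) l = c * sumR f l.
Proof. induction l; simpl; [ring|rewrite IHl; ring]. Qed.
Lemma sumN_plus {D} (f g : D -> nat) l : sumN (fun x => f x + g x)%nat l = (sumN f l + sumN g l)%nat.
Proof. induction l; simpl; [lia|rewrite IHl; lia]. Qed.
Lemma sumR_INR {D} (f : D -> nat) l : sumR (fun x => INR (f x)) l = INR (sumN f l).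
Proof. induction l; simpl; [reflexivity|rewrite IHl, plus_INR; ring]. Qed.
Lemma sumR_map {D} (f : D -> R) (h : D -> D) l : sumR f (map h l) = sumR (fun x => f (h x)) l.
Proof. induction l; simpl; [ring|rewrite IHl; ring]. Qed.
Lemma sumR_rev {D} (f : D -> R) l : sumR f (rev l) = sumR f l.
Proof. induction l; simpl; [ring|rewrite sumR_app, IHl; simpl; ring]. Qed.
Lemma sumR_cong {D} (f g : D -> R) l : (forall x, cong (f x) (g x)) -> cong (sumR f l) (sumR g l).
Proof. intros H; induction l; simpl; [apply cong_refl|apply cong_add; auto]. Qed.
Lemma sumR_const {D} (c : R) (l : list D) : sumR (fun _ => c) l = INR (length l) * c.
Proof. induction l; simpl length; [simpl; ring|]. rewrite S_INR; simpl; rewrite IHl; ring. Qed.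

Lemma traj_length {D} (f : D -> D) d n : length (traj f d n) = n.
Proof. revert d; induction n; intros; simpl; auto. Qed.
Lemma traj_add {D} (f : D -> D) d a b :
  traj f d (a + b) = traj f d a ++ traj f (Nat.iter a f d) b.
Proof.
  revert d; induction a; intros d; simpl; auto.
  rewrite IHa, <- Nat.iter_succ_r. reflexivity.
Qed.
Lemma traj_S {D} (f : D -> D) d n : traj f d (S n) = traj f d n ++ [Nat.iter n f d].
Proof. rewrite <- Nat.add_1_r, traj_add. reflexivity. Qed.
Lemma map_traj {D} (f : D -> D) d n : map f (traj f d n) = traj f (f d) n.
Proof. revert d; induction n; intros; simpl; auto. rewrite IHn; auto. Qed.

Lemma sumR_shift {D} (f : D -> D) (F : D -> R) c k :
  Nat.iter k f c = c -> sumR (fun x => F (f x)) (traj f c k) = sumR F (traj f c k).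
Proof.
  intros Hk. rewrite <- sumR_map, map_traj.
  assert (E1 := traj_S f c k). assert (E2 : traj f c (S k) = c :: traj f (f c) k) by reflexivity.
  assert (sumR F (traj f c (S k)) = sumR F (traj f c (S k))) as E by reflexivity.
  rewrite E1 in E at 1. rewrite E2 in E. rewrite sumR_app, Hk in E. simpl in E. lra.
Qed.
Lemma sumN_shift {D} (f : D -> D) (F : D -> nat) c k :
  Nat.iter k f c = c -> sumN (fun x => F (f x)) (traj f c k) = sumN F (traj f c k).
Proof.
  intros Hk. assert (H0 : sumN (fun x => F (f x)) (traj f c k) = sumN F (map f (traj f c k))).
  { clear Hk. induction (traj f c k); simpl; auto. }
  rewrite H0, map_traj.
  assert (E1 := traj_S f c k). assert (E2 : traj f c (S k) = c :: traj f (f c) k) by reflexivity.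
  assert (sumN F (traj f c (S k)) = sumN F (traj f c (S k))) as E by reflexivity.
  rewrite E1 in E at 1. rewrite E2 in E. rewrite sumN_app, Hk in E. simpl in E. lia.
Qed.

Lemma iter_mult {D} (f : D -> D) d p q : Nat.iter p f d = d -> Nat.iter (q * p) f d = d.
Proof.
  intros H; induction q; simpl; auto.
  rewrite Nat.iter_add, IHq; auto.
Qed.

Section Main.
Variables (D : Type) (sig iota : D -> D) (th : D -> R) (o : FV D -> FV D -> bool).
Hypothesis Hpm : plane_map sig iota.
Hypothesis Hiso : isoradial_angles sig iota th.
Hypothesis Hadm : admissible sig iota o.

Lemma ii d : iota (iota d) = d.
Proof. apply Hpm. Qed.
Lemma per_sig d : exists n, is_period sig d n.
Proof. apply Hpm. Qed.

Lemma o_rev a b : fisher_edge0 sig iota a b -> o b a = negb (o a b).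
Proof.
  intros H. destruct Hadm as [[_ Ho] _].
  assert (A : fisher_adj sig iota a b) by (left; exact H).
  specialize (Ho a b A). destruct (o a b), (o b a); simpl; congruence.
Qed.

Lemma sv_refl d : same_vertex sig d d.
Proof. exists 0%nat. reflexivity. Qed.
Lemma sv_trans a b c : same_vertex sig a b -> same_vertex sig b c -> same_vertex sig a c.
Proof. intros [n Hn] [m Hm]. exists (m + n)%nat. rewrite Nat.iter_add, Hn. auto. Qed.
Lemma sv_sym a b : same_vertex sig a b -> same_vertex sig b a.
Proof.
  intros [n Hn]. destruct (per_sig a) as [p [Hp [Hpp _]]].
  exists (n * p - n)%nat. rewrite <- Hn, <- Nat.iter_add.
  replace (n * p - n + n)%nat with (n * p)%nat by nia.
  apply iter_mult; auto.
Qed.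
Lemma sv_sig d : same_vertex sig d (sig d).
Proof. exists 1%nat. reflexivity. Qed.

Definition SS r n := sumR (incR2 sig th o) (traj sig r n).

Lemma bit_neg (b : bool) : (if negb b then 1 else 0)%nat = (1 - (if b then 1 else 0))%nat.
Proof. destruct b; reflexivity. Qed.

Lemma co_rev_traj y n :
  co_path o (rev (map W (traj sig y (S n)))) =
  sumN (fun e => if o (W (sig e)) (W e) then 1 else 0)%nat (traj sig y n).
Proof.
  revert y; induction n; intros y; [reflexivity|].
  change (traj sig y (S (S n))) with (y :: traj sig (sig y) (S n)).
  change (traj sig y (S n)) with (y :: traj sig (sig y) n).
  cbn [map rev sumN]. rewrite <- IHn.
  change (traj sig (sig y) (S n)) with (sig y :: traj sig (sig (sig y)) n).
  cbn [map rev].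
  generalize (rev (map W (traj sig (sig (sig y)) n))). intros l.
  rewrite <- app_assoc. simpl app.
  induction l as [|a l IH]; [simpl; lia|].
  destruct l as [|b l]; simpl in *; [lia|]. rewrite IH. lia.
Qed.

Lemma vertex_sum x p : is_period sig x p -> cong (SS x p) 0.
Proof.
  intros Hp. destruct Hiso as [_ [_ [Hv _]]]. destruct Hadm as [_ [Hin _]].
  specialize (Hv _ _ Hp). specialize (Hin _ _ Hp).
  destruct Hp as [Hp0 [Hpx _]]. destruct p as [|q]; [lia|].
  unfold SS, incR2.
  assert (E : forall e, (if o (W e) (W (sig e)) then 0 else 2 * PI) =
     2 * PI * INR (if o (W (sig e)) (W e) then 1 else 0)%nat).
  { intros e. rewrite (o_rev (W e) (W (sig e))) by (exists e; left; auto).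
    destruct (o (W e) (W (sig e))); simpl; ring. }
  rewrite sumR_plus, Hv, (sumR_ext _ _ _ E), sumR_scal, sumR_INR.
  unfold inner_face_cw, co_cycle in Hin.
  remember (rev (map W (traj sig x (S q)))) as l.
  assert (Hl : l = rev (map W (traj sig (sig x) q)) ++ [W x] /\
               exists t, l = W (Nat.iter q sig x) :: t).
  { subst l. split; [reflexivity|]. rewrite traj_S. rewrite map_app, rev_app_distr. simpl. eauto. }
  destruct Hl as [Hl1 [t Ht]].
  rewrite Ht in Hin. rewrite <- Ht in Hin. rewrite Hl1 in Hin.
  rewrite <- app_assoc in Hin.
  assert (Hc : co_path o (rev (map W (traj sig (sig x) q)) ++ [W x; W (Nat.iter q sig x)]) =
      (co_path o (rev (map W (traj sig (sig x) q)) ++ [W x]) +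
       (if o (W x) (W (Nat.iter q sig x)) then 1 else 0))%nat).
  { generalize (rev (map W (traj sig (sig x) q))). intros l0.
    induction l0 as [|a l0 IH]; [simpl; lia|].
    destruct l0 as [|b l0]; simpl in *; [lia|]. rewrite IH. lia. }
  change ([W x] ++ [W (Nat.iter q sig x)]) with [W x; W (Nat.iter q sig x)] in Hin.   rewrite Hc in Hin. rewrite <- Hl1, Heql in Hin.
  rewrite co_rev_traj in Hin.
  rewrite traj_S, sumN_app. simpl sumN. simpl in Hpx. rewrite Hpx.
  apply Nat.odd_spec in Hin. destruct Hin as [m Hm].
  match goal with |- context [INR ?N] => replace N with (2*m+1)%nat by lia end.
  exists (1 + Z.of_nat m)%Z.
  rewrite plus_INR, mult_INR, plus_IZR, <- INR_IZR_INZ. simpl. lra.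
Qed.

Lemma SS_add r a b : SS r (a + b) = SS r a + SS (Nat.iter a sig r) b.
Proof. unfold SS. rewrite traj_add, sumR_app. reflexivity. Qed.

Lemma SS_zero x j : Nat.iter j sig x = x -> cong (SS x j) 0.
Proof.
  intros Hj. destruct (per_sig x) as [p Hp].
  assert (Hp' := Hp). destruct Hp' as [Hp0 [Hpx Hmin]].
  assert (Hd := Nat.div_mod j p ltac:(lia)).
  assert (Hr := Nat.mod_upper_bound j p ltac:(lia)).
  set (q := (j / p)%nat) in *. set (rr := (j mod p)%nat) in *.
  assert (Hj2 : j = (rr + q * p)%nat) by lia.
  rewrite Hj2, Nat.iter_add, iter_mult in Hj by auto.
  destruct rr as [|rr].
  2:{ exfalso. apply (Hmin (S rr)); auto; lia. }
  rewrite Hj2. simpl plus. clear Hj Hj2 Hd.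
  induction q as [|q IH]; [exists 0%Z; unfold SS; simpl; ring|].
  change (S q * p)%nat with (p + q * p)%nat. rewrite SS_add, Hpx.
  eapply cong_trans; [apply cong_add; [apply vertex_sum, Hp|apply IH]|]. apply cong_eq; ring.
Qed.

Lemma SS_K r n m : Nat.iter n sig r = Nat.iter m sig r -> cong (SS r n) (SS r m).
Proof.
  intros H. destruct (Nat.le_ge_cases n m) as [Hnm|Hnm].
  - replace m with (n + (m - n))%nat by lia. rewrite SS_add.
    assert (Z := SS_zero (Nat.iter n sig r) (m - n)).
    rewrite <- Nat.iter_add in Z. replace (m - n + n)%nat with m in Z by lia. rewrite <- H in Z.
    specialize (Z eq_refl).
    apply cong_sym. eapply cong_trans; [apply cong_add; [apply cong_refl|exact Z]|]. apply cong_eq; ring.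
  - replace n with (m + (n - m))%nat by lia. rewrite SS_add.
    assert (Z := SS_zero (Nat.iter m sig r) (n - m)).
    rewrite <- Nat.iter_add in Z. replace (n - m + m)%nat with n in Z by lia. rewrite H in Z.
    specialize (Z eq_refl).
    eapply cong_trans; [apply cong_add; [apply cong_refl|exact Z]|]. apply cong_eq; ring.
Qed.

Variable inh : inhabited D.

Definition rep (a : D) : D := epsilon inh (fun r => same_vertex sig r a).
Lemma rep_spec a : same_vertex sig (rep a) a.
Proof. unfold rep. apply epsilon_spec. exists a. apply sv_refl. Qed.
Lemma rep_eq a b : same_vertex sig a b -> rep a = rep b.
Proof.
  intros H. unfold rep. f_equal. apply functional_extensionality. intros r.
  apply propositional_extensionality. split; intros H'.
  - eapply sv_trans; eauto.
  - eapply sv_trans; eauto. apply sv_sym; auto.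
Qed.

Definition P (a : D) : R :=
  epsilon (inhabits 0) (fun x => exists n, Nat.iter n sig (rep a) = a /\ x = SS (rep a) n).
Lemma P_spec a : exists n, Nat.iter n sig (rep a) = a /\ P a = SS (rep a) n.
Proof.
  unfold P. set (Q := fun x => exists n, Nat.iter n sig (rep a) = a /\ x = SS (rep a) n).
  assert (HQ : Q (epsilon (inhabits 0) Q)).
  { apply epsilon_spec. destruct (rep_spec a) as [n Hn]. exists (SS (rep a) n), n. auto. }
  exact HQ.
Qed.

Lemma P_sig a : cong (P (sig a)) (P a + incR2 sig th o a).
Proof.
  destruct (P_spec a) as [n [Hn E]]. destruct (P_spec (sig a)) as [m [Hm E']].
  rewrite (rep_eq (sig a) a) in Hm, E' by (apply sv_sym, sv_sig).
  rewrite E, E'. eapply cong_trans; [apply (SS_K _ m (n + 1))|].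
  - rewrite Hm, Nat.add_comm. simpl. rewrite Hn. reflexivity.
  - rewrite SS_add, Hn. unfold SS. simpl. apply cong_eq; ring.
Qed.

Lemma fe_WW d : fisher_edge0 sig iota (W d) (W (sig d)).
Proof. exists d. left; auto. Qed.
Lemma fe_VW1 d : fisher_edge0 sig iota (V d) (W d).
Proof. exists d. right; left; auto. Qed.
Lemma fe_VW2 d : fisher_edge0 sig iota (V d) (W (sig d)).
Proof. exists d. right; right; left; auto. Qed.
Lemma fe_VV d : fisher_edge0 sig iota (V d) (V (iota d)).
Proof. exists d. right; right; right; auto. Qed.

Lemma incR3_anti d : incR3 iota o (iota d) = - incR3 iota o d.
Proof.
  unfold incR3. rewrite ii. simpl co_path.
  rewrite (o_rev _ _ (fe_VW1 (iota d))).
  rewrite (o_rev _ _ (fe_VV d)).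
  rewrite (o_rev _ _ (fe_VW1 d)).
  destruct (o (V (iota d)) (W (iota d))), (o (V d) (V (iota d))), (o (V d) (W d)); simpl; ring.
Qed.

Definition g (d : D) : R := incR3 iota o d + P d - P (iota d).
Lemma g_anti d : g (iota d) = - g d.
Proof. unfold g. rewrite incR3_anti, ii. ring. Qed.

Definition cn := corner_next sig iota.
Definition bit (b : bool) : nat := if b then 1%nat else 0%nat.
Definition Nc (c : D) : nat :=
  (bit (Nat.odd (co_path o [W (iota c); V (iota c); V (iota (iota c)); W (iota (iota c))])) +
   bit (o (W c) (W (sig c))))%nat.
Definition f1 (c : D) : nat := bit (o (V c) (W (sig c))).
Definition h (x : D) : nat := (bit (o (W x) (V x)) + bit (o (V x) (V (iota x))))%nat.

Lemma term_eq c : incR3 iota o (iota c) + incR2 sig th o c =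
   3 * PI + 2 * th c - 2 * PI * INR (Nc c).
Proof.
  unfold incR3, incR2, Nc, bit.
  destruct (Nat.odd _), (o (W c) (W (sig c))); simpl; ring.
Qed.

Lemma parity_c c : Nat.even (Nc c + f1 c + h (iota c)) = true.
Proof.
  destruct Hadm as [_ [_ [Htr _]]]. specialize (Htr c).
  unfold co_cycle, triangle_cw in Htr. simpl in Htr.
  rewrite (o_rev _ _ (fe_VW2 c)) in Htr.
  unfold Nc, f1, h, bit. rewrite !ii. simpl co_path.
  destruct (o (W (iota c)) (V (iota c))), (o (V (iota c)) (V c)), (o (V c) (W c)),
    (o (W c) (W (sig c))), (o (V c) (W (sig c))); simpl in *; auto.
Qed.

Lemma sum_even {A} (F : A -> nat) l : (forall x, Nat.even (F x) = true) ->
  exists M, sumN F l = (2 * M)%nat.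
Proof.
  intros H. induction l as [|a l [M HM]]; [exists 0%nat; reflexivity|].
  specialize (H a). apply Nat.even_spec in H. destruct H as [m Hm].
  exists (m + M)%nat. simpl. lia.
Qed.

Definition blk (x : D) : list (FV D) := [V x; W (sig x); V (sig x)].

Lemma bf_head n c : exists t, flat_map blk (traj cn c n) ++ [V (Nat.iter n cn c)] = V c :: t.
Proof. destruct n; simpl; eauto. Qed.

Lemma bf_co n c : co_path o (flat_map blk (traj cn c n) ++ [V (Nat.iter n cn c)]) =
   sumN (fun x => f1 x + h (sig x))%nat (traj cn c n).
Proof.
  revert c; induction n; intros c; [reflexivity|].
  change (traj cn c (S n)) with (c :: traj cn (cn c) n).
  rewrite Nat.iter_succ_r. simpl flat_map. cbn [app].
  destruct (bf_head n (cn c)) as [t Ht].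
  rewrite Ht. change (co_path o (V c :: W (sig c) :: V (sig c) :: V (cn c) :: t)) with (bit (o (V c) (W (sig c))) + (bit (o (W (sig c)) (V (sig c))) + (bit (o (V (sig c)) (V (cn c))) + co_path o (V (cn c) :: t))))%nat. rewrite <- Ht, IHn. simpl sumN.
  unfold f1, h, bit, cn, corner_next. lia.
Qed.

Lemma sumN_even_split (F G : D -> nat) l : sumN (fun x => F x + G x)%nat l = (sumN F l + sumN G l)%nat.
Proof. apply sumN_plus. Qed.

Lemma face_lemma c k : is_period cn c k ->
  cong (sumR (fun x => incR3 iota o (iota x) + incR2 sig th o x) (traj cn c k)) 0.
Proof.
  intros Hp.
  destruct Hiso as [_ [Hthi [_ Hf]]]. specialize (Hf c k Hp).
  destruct Hadm as [_ [_ [_ Hbf]]]. specialize (Hbf c k Hp).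
  destruct Hp as [Hk0 [Hk _]].
  set (l := traj cn c k) in *. change (traj (corner_next sig iota) c k) with l in Hf.
  assert (Hth : sumR th l = sumR (fun x => th (sig x)) l).
  { unfold l. rewrite <- (sumR_shift cn th c k Hk). apply sumR_ext. intros x. unfold cn, corner_next.
    rewrite Hthi. reflexivity. }
  assert (Hf' : sumR (fun e => PI - 2 * th (sig e)) l = INR k * PI - 2 * sumR th l).
  { rewrite sumR_minus, sumR_const, sumR_scal, Hth. unfold l. rewrite traj_length. ring. }
  destruct (sum_even _ l parity_c) as [M HM].
  rewrite !sumN_plus in HM.
  assert (Hh : sumN (fun x => h (iota x)) l = sumN (fun x => h (sig x)) l).
  { unfold l. rewrite <- (sumN_shift cn (fun x => h (iota x)) c k Hk). apply sumN_ext. intros x.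
    unfold cn, corner_next. rewrite ii. reflexivity. }
  unfold co_cycle, big_face_cw in Hbf.
  destruct k as [|k']; [lia|].
  assert (Hbf2 : co_path o (flat_map blk l ++ [V c]) = sumN (fun x => f1 x + h (sig x))%nat l).
  { pose proof (bf_co (S k') c) as B. rewrite Hk in B. exact B. }
  change (traj (corner_next sig iota) c (S k')) with (c :: traj cn (cn c) k') in Hbf.
  change (c :: traj cn (cn c) k') with l in Hbf.
  change (flat_map (fun c0 : D => [V c0; W (sig c0); V (sig c0)]) l) with (flat_map blk l) in Hbf.
  assert (Hhd : exists t, flat_map blk l = V c :: t).
  { unfold l. simpl. eauto. }
  destruct Hhd as [t Ht]. rewrite Ht in Hbf. rewrite <- Ht in Hbf.
  rewrite Hbf2, sumN_plus, <- Hh in Hbf.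
  apply Nat.odd_spec in Hbf. destruct Hbf as [j Hj].
  rewrite (sumR_ext _ _ _ term_eq).
  rewrite sumR_minus, sumR_plus, sumR_const, !sumR_scal, sumR_INR.
  unfold l at 1. rewrite traj_length.
  assert (HN : (sumN Nc l + 1 = 2 * (M - j))%nat) by lia.
  assert (HNR : INR (sumN Nc l) = 2 * INR (M - j) - 1).
  { apply (f_equal INR) in HN. rewrite plus_INR, mult_INR in HN. change (INR 1) with 1 in HN. replace (INR 2) with 2 in HN by (simpl; lra). lra. }
  rewrite HNR.
  exists (Z.of_nat (S k') - Z.of_nat (M - j))%Z.
  rewrite minus_IZR, <- !INR_IZR_INZ. lra.
Qed.

Definition fn := face_next sig iota.

Lemma conj_iter n e : Nat.iter n cn (iota e) = iota (Nat.iter n fn e).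
Proof.
  induction n; [reflexivity|]. simpl. rewrite IHn. unfold cn, fn, corner_next, face_next.
  reflexivity.
Qed.

Lemma period_conj e k : is_period fn e k -> is_period cn (iota e) k.
Proof.
  intros [H0 [H1 H2]]. split; [auto|split].
  - rewrite conj_iter, H1. reflexivity.
  - intros m Hm0 Hm1 E. rewrite conj_iter in E. apply (f_equal iota) in E. rewrite !ii in E.
    apply (H2 m); auto.
Qed.

Lemma traj_conj e k : traj fn e k = map iota (traj cn (iota e) k).
Proof.
  revert e; induction k; intros e; [reflexivity|].
  simpl. rewrite ii, IHk. reflexivity.
Qed.

Lemma face_g e k : is_period fn e k -> cong (sumR g (traj fn e k)) 0.
Proof.
  intros Hp. apply period_conj in Hp. assert (Hp' := Hp). destruct Hp' as [_ [Hk _]].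
  rewrite traj_conj, sumR_map. set (c := iota e) in *. set (l := traj cn c k).
  assert (E1 : sumR (fun x => g (iota x)) l =
     sumR (fun x => incR3 iota o (iota x) + P (sig x) - P x) l).
  { unfold g. rewrite !sumR_minus, !sumR_plus.
    assert (S1 : sumR (fun x => P (iota x)) l = sumR (fun x => P (sig x)) l).
    { unfold l. rewrite <- (sumR_shift cn (fun x => P (iota x)) c k Hk). apply sumR_ext.
      intros x. unfold cn, corner_next. rewrite ii. reflexivity. }
    rewrite S1. erewrite (sumR_ext (fun x => P (iota (iota x))) P) by (intros; rewrite ii; reflexivity).
    ring. }
  rewrite E1. eapply cong_trans; [|apply (face_lemma c k Hp)].
  apply sumR_cong. intros x. destruct (P_sig x) as [z Hz]. exists z. lra.
Qed.

Lemma hstep_cong l l' : hstep sig iota l l' -> cong (sumR g l) (sumR g l').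
Proof.
  intros H. destruct H as [l1 l2 d|l1 l2 e k Hp].
  - rewrite !sumR_app. simpl. rewrite g_anti. apply cong_eq. ring.
  - rewrite !sumR_app. apply (face_g e k) in Hp. destruct Hp as [z Hz].
    exists z. unfold fn in Hz. lra.
Qed.

Lemma homotopic_cong l l' : homotopic sig iota l l' -> cong (sumR g l) (sumR g l').
Proof.
  intros H. induction H.
  - apply hstep_cong; auto.
  - apply cong_refl.
  - apply cong_sym; auto.
  - eapply cong_trans; eauto.
Qed.

Fixpoint chain (a : D) (L : list D) (b : D) : Prop :=
  match L with
  | [] => same_vertex sig a b
  | d :: t => same_vertex sig a d /\ chain (iota d) t b
  end.

Lemma chain_pre a a' L b : same_vertex sig a a' -> chain a' L b -> chain a L b.
Proof.
  destruct L; simpl; intros H1 H2.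
  - eapply sv_trans; eauto.
  - destruct H2; split; auto. eapply sv_trans; eauto.
Qed.

Lemma chain_app a L1 m L2 b : chain a L1 m -> chain m L2 b -> chain a (L1 ++ L2) b.
Proof.
  revert a; induction L1 as [|d L1 IH]; intros a H1 H2; simpl in *.
  - eapply chain_pre; eauto.
  - destruct H1; split; auto.
Qed.

Lemma chain_rev a L b : chain a L b -> chain b (rev (map iota L)) a.
Proof.
  revert a; induction L as [|d L IH]; intros a H; simpl in *.
  - apply sv_sym; auto.
  - destruct H as [H1 H2]. eapply chain_app; [apply IH; eauto|].
    simpl. split; [apply sv_refl|]. rewrite ii. apply sv_sym; auto.
Qed.

Lemma last_indep (L : list D) e x y : last (e :: L) x = last (e :: L) y.
Proof.
  revert e; induction L as [|f L IH]; intros e; [reflexivity|].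
  change (last (e :: f :: L) x) with (last (f :: L) x).
  change (last (e :: f :: L) y) with (last (f :: L) y). apply IH.
Qed.

Lemma chain_walk L : forall a d b, chain a (d :: L) b ->
  walk_chain sig iota (d :: L) /\ same_vertex sig a d /\
  same_vertex sig (iota (last (d :: L) d)) b.
Proof.
  induction L as [|e L IH]; intros a d b H.
  - simpl in H. destruct H. simpl. auto.
  - destruct H as [H1 H2]. destruct (IH _ _ _ H2) as [W1 [W2 W3]].
    split; [simpl; auto|]. split; auto.
    change (last (d :: e :: L) d) with (last (e :: L) d).
    rewrite (last_indep L e d e). auto.
Qed.

Lemma rw_chain d e s : rule_walk sig iota th o d e s ->
  exists L, chain d L e /\ cong s (P e - P d + sumR g L).
Proof.
  induction 1 as [d|d e s H [L [HL Hc]]|d e s H [L [HL Hc]]|d e s H [L [HL Hc]]].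
  - exists []. split; [apply sv_refl|]. apply cong_eq. simpl. ring.
  - exists L. split; [eapply chain_pre; [apply sv_sig|eauto]|].
    destruct Hc as [z Hz]. destruct (P_sig d) as [z' Hz']. exists (z - z')%Z.
    rewrite minus_IZR. lra.
  - exists L. split; [eapply chain_pre; [apply sv_sym, sv_sig|eauto]|].
    destruct Hc as [z Hz]. destruct (P_sig d) as [z' Hz']. exists (z + z')%Z.
    rewrite plus_IZR. lra.
  - exists (d :: L). split; [simpl; split; auto; apply sv_refl|].
    destruct Hc as [z Hz]. exists z. simpl. assert (Eg : g d = incR3 iota o d + P d - P (iota d)) by reflexivity. rewrite Eg, <- Hz. ring.
Qed.

Lemma main_sec d0 d s1 s2 :
  rule_walk sig iota th o d0 d s1 -> rule_walk sig iota th o d0 d s2 -> cong s1 s2.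
Proof.
  intros H1 H2. destruct (rw_chain _ _ _ H1) as [L1 [C1 E1]].
  destruct (rw_chain _ _ _ H2) as [L2 [C2 E2]].
  set (L := L1 ++ rev (map iota L2)).
  assert (C : chain d0 L d0) by (eapply chain_app; [eauto|apply chain_rev; eauto]).
  assert (SL : sumR g L = sumR g L1 - sumR g L2).
  { unfold L. rewrite sumR_app, sumR_rev, sumR_map.
    rewrite (sumR_ext (fun x => g (iota x)) (fun x => -1 * g x)) by (intros; rewrite g_anti; ring).
    rewrite sumR_scal. ring. }
  assert (Z : cong (sumR g L) 0).
  { destruct L as [|x L'] eqn:EL; [apply cong_refl|].
    destruct (chain_walk L' _ _ _ C) as [W1 [W2 W3]].
    assert (CW : closed_walk sig iota (x :: L')).
    { split; auto. eapply sv_trans; eauto. }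
    destruct Hpm as [_ [_ [_ [_ [_ [_ Hpl]]]]]].
    eapply cong_trans; [apply homotopic_cong, Hpl, CW|apply cong_refl]. }
  destruct E1 as [a Ha], E2 as [b Hb], Z as [c Hc].
  exists (a - b + c)%Z. rewrite plus_IZR, minus_IZR. lra.
Qed.
End Main.

Theorem mainTheorem1 (D : Type) (sig iota : D -> D) (th : D -> R)
  (o : FV D -> FV D -> bool) :
  plane_map sig iota ->
  isoradial_angles sig iota th ->
  admissible sig iota o ->
  forall (d0 d : D) (s1 s2 : R),
    rule_walk sig iota th o d0 d s1 ->
    rule_walk sig iota th o d0 d s2 ->
    exists k : Z, s1 - s2 = 4 * PI * IZR k.
Proof.
  intros Hpm Hiso Hadm d0 d s1 s2 H1 H2.
  exact (main_sec D sig iota th o Hpm Hiso Hadm (inhabits d0) d0 d s1 s2 H1 H2).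
Qed.
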